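(* Let $\mathcal{A}=(Q,\Sigma,\delta)$ be a DFA with $Q=\{1,\dots,n\}$. Fix positive integers $d_1,d_2$ and non-empty sets of words $W_1\subseteq\Sigma^{\le d_1}$, $W_2\subseteq\Sigma^{\le d_2}$. Let $R=\{q.w\mid q\in Q,\ w\in W_1\}$ and let $\mathcal{B}=\mathcal{A}_c(W_1,W_2)=(R,W_2W_1,\delta_{\mathcal{B}})$ be the DFA with state set $R$, whose alphabet is the finite set $W_2W_1=\{w_2w_1\mid w_2\in W_2,w_1\in W_1\}$ (each such word treated as a single letter), and $\delta_{\mathcal{B}}(q,w)=q.w$. Let $P_1,P_2$ be positive probability distributions on $W_1,W_2$, put $[P_i]=\sum_{w\in W_i}P_i(w)[w]$, and let $\alpha\in V_R$ be a stochastic vector (non-negative entries summing to $1$, supported on $R$) with $\alpha[P_2][P_1]=\alpha$. Suppose that $W_2W_1$ is complete for $V_R$ with respect to $\alpha$, and that $w_0\in\Sigma^*$ satisfies $Q.w_0=R$. Then: (1) for every $x\in V_R\setminus\langle [R]\rangle$ there exists $w\in W_2W_1$ with $(x,\alpha[w])>(x,\alpha)$; (2) $\mathcal{B}$ is synchronizing and $\mathrm{rt}(\mathcal{B})\le \mathrm{DS}(\alpha)-1$; (3) $\mathcal{A}$ is synchronizing, and $\mathrm{rt}(\mathcal{A})\le |w_0|+\mathrm{rt}(\mathcal{B})(d_1+d_2)\le |w_0|+(\mathrm{DS}(\alpha)-1)(d_1+d_2)$ if $R\ne Q$, while $\mathrm{rt}(\mathcal{A})\le 1+(\mathrm{DS}(\alpha)-2)(d_1+d_2)$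 if $R=Q$.
   Context: A DFA $\mathcal{A}=(Q,\Sigma,\delta)$ has a finite non-empty state set $Q$, finite non-empty alphabet $\Sigma$ and total transition function $\delta:Q\times\Sigma\to Q$, extended to words; $q.w=\delta(q,w)$ and $S.w=\{q.w\mid q\in S\}$. $\Sigma^{\le c}$ is the set of words of length at most $c$. A reset word is a word $w$ with $|Q.w|=1$; $\mathcal{A}$ is synchronizing if it has one, and $\mathrm{rt}(\mathcal{A})$ (reset threshold) is the length of a shortest reset word. With $Q=\{1,\dots,n\}$, vectors in $\mathbb{R}^n$ are row vectors; $[K]\in\mathbb{R}^n$ is the characteristic vector of $K\subseteq Q$ and $[q]=[\{q\}]$. For a word $w$, $[w]$ is the $n\times n$ 0-1 matrix with $[w]_{p,q}=1$ iff $p.w=q$, so $[uv]=[u][v]$. $(\cdot,\cdot)$ is the standard inner product, $\langle\cdot\rangle$ linear span. For $S\subseteq Q$, $V_S=\langle [p]\mid p\in S\rangle$. A set of words $W$ is complete for a subspace $V\le\mathbb{R}^n$ with respect to $g\in V$ if $\langle g[w]\mid w\in W\rangle=V$. For a non-negative vector $g\in\mathbb{R}^n$, $\mathrm{DS}(g)=|\{(g,z)\mid z\in\{0,1\}^n\}|-1$ (the number of distinct positive subset sums of entries of $g$). *)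

(* Defs.v *)
From HB Require Import structures.
From mathcomp Require Import all_boot all_order all_algebra.
Set Implicit Arguments. Unset Strict Implicit. Unset Printing Implicit Defensive.
Import Order.TTheory GRing.Theory Num.Theory.
Local Open Scope ring_scope.

Section DFA.
Variables (n : nat) (Sigma : finType) (delta : 'I_n -> Sigma -> 'I_n).

Definition act (q : 'I_n) (w : seq Sigma) : 'I_n :=
  foldl (fun p a => delta p a) q w.

Definition setact (S : {set 'I_n}) (w : seq Sigma) : {set 'I_n} :=
  [set act q w | q in S].

Definition is_reset (w : seq Sigma) : Prop := #|setact [set: 'I_n] w| = 1%N.

Definition synchronizing : Prop := exists w, is_reset w.

Definition reach (W : seq (seq Sigma)) : {set 'I_n} :=
  [set q | [exists p : 'I_n, has (fun w => act p w == q) W]].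

Definition wmx (R : realFieldType) (w : seq Sigma) : 'M[R]_n :=
  \matrix_(p, q) ((act p w == q)%:R).

End DFA.

Definition is_min_size (T : Type) (P : T -> Prop) (sz : T -> nat) (k : nat) : Prop :=
  (exists x, P x /\ sz x = k) /\ (forall x, P x -> (k <= sz x)%N).

Definition rt_is n (Sigma : finType) (delta : 'I_n -> Sigma -> 'I_n) (k : nat) :=
  is_min_size (@is_reset n Sigma delta) size k.

(* the DFA B = A_c(W1,W2): state set R, alphabet the finite set of words W21,
   delta_B(q, w) = q.w.  A word over B is a list u of letters (words of W21);
   its action is that of the concatenation. *)
Definition B_is_reset n (Sigma : finType) (delta : 'I_n -> Sigma -> 'I_n)
    (R : {set 'I_n}) (W21 : seq (seq Sigma)) (u : seq (seq Sigma)) : Prop :=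
  all (fun x => x \in W21) u /\ #|setact delta R (flatten u)| = 1%N.

Definition B_synchronizing n (Sigma : finType) (delta : 'I_n -> Sigma -> 'I_n)
    (R : {set 'I_n}) (W21 : seq (seq Sigma)) : Prop :=
  exists u, B_is_reset delta R W21 u.

Definition B_rt_is n (Sigma : finType) (delta : 'I_n -> Sigma -> 'I_n)
    (R : {set 'I_n}) (W21 : seq (seq Sigma)) (k : nat) : Prop :=
  is_min_size (B_is_reset delta R W21) size k.

Definition concat_words (Sigma : Type) (W2 W1 : seq (seq Sigma)) : seq (seq Sigma) :=
  [seq w2 ++ w1 | w2 <- W2, w1 <- W1].

Definition charvec (R : realFieldType) n (K : {set 'I_n}) : 'rV[R]_n :=
  \row_i ((i \in K)%:R).

Definition inner (R : realFieldType) n (x y : 'rV[R]_n) : R :=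
  \sum_i x 0 i * y 0 i.

Definition VS (R : realFieldType) n (S : {set 'I_n}) : 'M[R]_n :=
  (\sum_(p in S) <<charvec R [set p]>>)%MS.

Definition distr_mx (R : realFieldType) n (Sigma : finType)
    (delta : 'I_n -> Sigma -> 'I_n) (W : seq (seq Sigma)) (P : seq Sigma -> R)
    : 'M[R]_n :=
  \sum_(w <- W) P w *: wmx delta R w.

(* positive probability distribution on the (duplicate-free) list W *)
Definition pos_distr (R : realFieldType) (Sigma : eqType) (W : seq (seq Sigma))
    (P : seq Sigma -> R) : Prop :=
  (forall w, w \in W -> 0 < P w) /\ \sum_(w <- W) P w = 1.

Definition complete_for (R : realFieldType) n (Sigma : finType)
    (delta : 'I_n -> Sigma -> 'I_n) (W : seq (seq Sigma)) (V : 'M[R]_n)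
    (g : 'rV[R]_n) : Prop :=
  (\sum_(w <- W) <<g *m wmx delta R w>> == V)%MS.

(* DS(g) = |{ (g,z) | z in {0,1}^n }| - 1, with z = [S] for S subset of Q *)
Definition DS (R : realFieldType) n (g : 'rV[R]_n) : nat :=
  (size (undup [seq inner g (charvec R K) | K : {set 'I_n}]) - 1)%N.

(* Main.v *)
Require Import Defs.
From HB Require Import structures.
From mathcomp Require Import all_boot all_order all_algebra.
From mathcomp Require Import zify ring lra.
Import Order.TTheory GRing.Theory Num.Theory.
Local Open Scope ring_scope.

Lemma act_cat n (Sigma : finType) (delta : 'I_n -> Sigma -> 'I_n) q u v :
  act delta q (u ++ v) = act delta (act delta q u) v.
Proof. by rewrite /act foldl_cat. Qed.

Lemma setact_cat n (Sigma : finType) (delta : 'I_n -> Sigma -> 'I_n) S u v :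
  setact delta S (u ++ v) = setact delta (setact delta S u) v.
Proof.
rewrite /setact -imset_comp; apply: eq_imset => q /=; exact: act_cat.
Qed.

Lemma wmx_cat (F : realFieldType) n (Sigma : finType) (delta : 'I_n -> Sigma -> 'I_n) u v :
  wmx delta F (u ++ v) = wmx delta F u *m wmx delta F v.
Proof.
apply/matrixP => p q; rewrite !mxE act_cat (bigD1 (act delta p u)) //= !mxE eqxx mul1r.
rewrite big1 ?addr0 // => k /negbTE; rewrite !mxE eq_sym => ->; by rewrite mul0r.
Qed.

Lemma rowact (F : realFieldType) n (Sigma : finType) (delta : 'I_n -> Sigma -> 'I_n)
   (alpha : 'rV[F]_n) w j :
  (alpha *m wmx delta F w) 0 j = \sum_i alpha 0 i * (act delta i w == j)%:R.
Proof. by rewrite mxE; apply: eq_bigr => i _; rewrite mxE. Qed.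

Lemma inner_charvec_act (F : realFieldType) n (Sigma : finType) (delta : 'I_n -> Sigma -> 'I_n)
   (alpha : 'rV[F]_n) w K :
  inner (charvec F K) (alpha *m wmx delta F w) =
  inner (charvec F [set i | act delta i w \in K]) alpha.
Proof.
rewrite /inner.
under eq_bigr => j _ do rewrite rowact mulr_sumr.
rewrite exchange_big /=; apply: eq_bigr => i _.
rewrite (bigD1 (act delta i w)) //= big1 ?addr0; last first.
  by move=> k /negbTE; rewrite eq_sym => ->; rewrite !mulr0.
by rewrite !mxE inE eqxx mulr1 mulrC.
Qed.

Lemma innerC (F : realFieldType) n (x y : 'rV[F]_n) : inner x y = inner y x.
Proof. by apply: eq_bigr => i _; rewrite mulrC. Qed.

Lemma innerE (F : realFieldType) n (x y : 'rV[F]_n) : inner x y = (x *m y^T) 0 0.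
Proof. by rewrite mxE; apply: eq_bigr => i _; rewrite mxE. Qed.

Lemma innerD (F : realFieldType) n (x y z : 'rV[F]_n) : inner x (y + z) = inner x y + inner x z.
Proof. by rewrite /inner -big_split; apply: eq_bigr => i _; rewrite mxE mulrDr. Qed.

Lemma innerZ (F : realFieldType) n (x y : 'rV[F]_n) a : inner x (a *: y) = a * inner x y.
Proof. by rewrite /inner mulr_sumr; apply: eq_bigr => i _; rewrite mxE mulrCA. Qed.

Lemma inner0 (F : realFieldType) n (x : 'rV[F]_n) : inner x 0 = 0.
Proof. by rewrite /inner big1 // => i _; rewrite mxE mulr0. Qed.

Lemma inner_sum (F : realFieldType) n (x : 'rV[F]_n) (I : Type) (r : seq I) (G : I -> 'rV[F]_n) :
  inner x (\sum_(i <- r) G i) = \sum_(i <- r) inner x (G i).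
Proof.
elim: r => [|i r IH]; first by rewrite !big_nil inner0.
by rewrite !big_cons innerD IH.
Qed.

Lemma count_lt (T : eqType) (p q : pred T) (s : seq T) (z : T) :
  (forall y, p y -> q y) -> z \in s -> q z -> ~~ p z -> (count p s < count q s)%N.
Proof.
move=> pq; elim: s => //= y s IH; rewrite inE => /orP[/eqP<- | xs] qx npx.
  rewrite (negbTE npx) qx add0n add1n ltnS; apply: sub_count => v; exact: pq.
have := IH xs qx npx; move: (pq y); case: (p y); case: (q y) => //= H; try lia.

Qed.

Lemma decomp (F : realFieldType) n (Sigma : finType) (delta : 'I_n -> Sigma -> 'I_n)
   (alpha : 'rV[F]_n) W1 W2 P1 P2 :
  alpha *m distr_mx delta W2 P2 *m distr_mx delta W1 P1 =
  \sum_(w2 <- W2) \sum_(w1 <- W1) (P2 w2 * P1 w1) *: (alpha *m wmx delta F (w2 ++ w1)).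
Proof.
rewrite /distr_mx [alpha *m _]mulmx_sumr mulmx_suml; apply: eq_bigr => w2 _.
rewrite -scalemxAr -scalemxAl mulmx_sumr scaler_sumr; apply: eq_bigr => w1 _.
by rewrite -scalemxAr scalerA wmx_cat mulmxA.
Qed.

Lemma pos2 (F : realFieldType) (Sigma : finType) (W1 W2 : seq (seq Sigma)) P1 P2
   (a : seq Sigma -> seq Sigma -> F) :
 (forall w, w \in W2 -> 0 < P2 w) -> (forall w, w \in W1 -> 0 < P1 w) ->
 (forall w2 w1, w2 \in W2 -> w1 \in W1 -> 0 <= a w2 w1) ->
 \sum_(w2 <- W2) \sum_(w1 <- W1) P2 w2 * P1 w1 * a w2 w1 = 0 ->
 forall w2 w1, w2 \in W2 -> w1 \in W1 -> a w2 w1 = 0.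
Proof.
move=> H2 H1 Ha Hs w2 w1 i2 i1.
have Hin : forall v2, v2 \in W2 -> 0 <= \sum_(v1 <- W1) P2 v2 * P1 v1 * a v2 v1.
  move=> v2 iv2; rewrite big_seq sumr_ge0 // => v1 iv1.
  by rewrite !mulr_ge0 // ?Ha // ltW // ?H2 // H1.
move: Hs; rewrite big_seq => /eqP; rewrite psumr_eq0 //.
move=> /allP /(_ w2 i2); rewrite i2 /= big_seq psumr_eq0; last first.
  by move=> v1 iv1; rewrite !mulr_ge0 // ?Ha // ltW // ?H2 // H1.
move=> /allP /(_ w1 i1); rewrite i1 /= !mulf_eq0 => /orP[/orP[]|/eqP//].
  by rewrite gt_eqF // H2.
by rewrite gt_eqF // H1.
Qed.

Lemma orth (F : realFieldType) n (Sigma : finType) (delta : 'I_n -> Sigma -> 'I_n)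
   (alpha : 'rV[F]_n) (W : seq (seq Sigma)) (V : 'M[F]_n) m (A : 'M[F]_(n, m)) :
  complete_for delta W V alpha ->
  (forall w, w \in W -> alpha *m wmx delta F w *m A = 0) ->
  forall z : 'rV[F]_n, (z <= V)%MS -> z *m A = 0.
Proof.
move=> /andP[_ HV] HW z Hz; apply/sub_kermxP; apply: (submx_trans Hz).
apply: (submx_trans HV); rewrite big_seq.
apply: (big_ind (fun M : 'M[F]_n => (M <= kermx A)%MS)).
- exact: sub0mx.
- by move=> x y Hx Hy; rewrite addsmx_sub Hx Hy.
- by move=> w Hw; rewrite genmxE; apply/sub_kermxP; apply: HW.
Qed.

Lemma charvec_sub (F : realFieldType) n (K R : {set 'I_n}) :
  K \subset R -> (charvec F K <= VS F R)%MS.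
Proof.
move=> KR.
have -> : charvec F K = \sum_(p in K) charvec F [set p].
  apply/rowP => i; rewrite summxE !mxE.
  rewrite ?summxE ?mxE; under eq_bigr => p _ do rewrite mxE inE.
  case Hi: (i \in K).
    rewrite (bigD1 i) //= eqxx big1 ?addr0 // => p /andP[_ /negbTE].
    by rewrite eq_sym => ->.
  by rewrite big1 // => p Hp; case: eqP Hi => // ->; rewrite Hp.
apply: summx_sub => p Hp.
apply: (sumsmx_sup p); first by apply: (subsetP KR).
by rewrite genmxE.
Qed.

Lemma reach_act n (Sigma : finType) (delta : 'I_n -> Sigma -> 'I_n) W1 p w1 :
  w1 \in W1 -> act delta p w1 \in reach delta W1.
Proof. by move=> H; rewrite inE; apply/existsP; exists p; apply/hasP; exists w1. Qed.

Lemma W21_reach n (Sigma : finType) (delta : 'I_n -> Sigma -> 'I_n) W1 W2 w q :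
  w \in concat_words W2 W1 -> act delta q w \in reach delta W1.
Proof.
by case/allpairsP => [[w2 w1] [_ /= H1 ->]]; rewrite act_cat reach_act.
Qed.

Lemma W21_size (Sigma : finType) (W1 W2 : seq (seq Sigma)) d1 d2 w :
  (forall w, w \in W1 -> (size w <= d1)%N) ->
  (forall w, w \in W2 -> (size w <= d2)%N) ->
  w \in concat_words W2 W1 -> (size w <= d1 + d2)%N.
Proof.
move=> H1 H2; case/allpairsP => [[w2 w1] [/= i2 i1 ->]]; rewrite size_cat.
rewrite addnC; apply: leq_add; [exact: H1 | exact: H2].
Qed.

Lemma innerBZl (F : realFieldType) n (x z v : 'rV[F]_n) a :
  inner (x - a *: z) v = inner x v - a * inner z v.
Proof.
rewrite /inner mulr_sumr -sumrB; apply: eq_bigr => i _; rewrite !mxE; ring.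
Qed.

Lemma part1 (F : realFieldType) (n : nat) (Sigma : finType)
    (delta : 'I_n -> Sigma -> 'I_n) (W1 W2 : seq (seq Sigma))
    (P1 P2 : seq Sigma -> F) (alpha : 'rV[F]_n) :
  pos_distr W1 P1 -> pos_distr W2 P2 ->
  \sum_i alpha 0 i = 1 ->
  alpha *m distr_mx delta W2 P2 *m distr_mx delta W1 P1 = alpha ->
  complete_for delta (concat_words W2 W1) (VS F (reach delta W1)) alpha ->
  forall x : 'rV[F]_n, (x <= VS F (reach delta W1))%MS ->
    ~~ (x <= charvec F (reach delta W1))%MS ->
     exists2 w, w \in concat_words W2 W1 &
        inner x alpha < inner x (alpha *m wmx delta F w).
Proof.
move=> [P1pos P1sum] [P2pos P2sum] Hsum Hstat Hcomp x Hx HnR.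
set R := reach delta W1; set W21 := concat_words W2 W1.
case: (boolP (has (fun w => inner x alpha < inner x (alpha *m wmx delta F w)) W21))
  => [/hasP[w Hw Hlt]|Hno]; first by exists w.
exfalso; move/negP: HnR; apply.
have Hle : forall w, w \in W21 -> inner x (alpha *m wmx delta F w) <= inner x alpha.
  move=> w Hw; rewrite leNgt; apply/negP => H; move/hasP: Hno; apply; by exists w.
set c := inner x alpha.
have E1 : \sum_(w2 <- W2) \sum_(w1 <- W1)
    P2 w2 * P1 w1 * inner x (alpha *m wmx delta F (w2 ++ w1)) = c.
  rewrite /c; have := congr1 (inner x) Hstat; rewrite decomp inner_sum => <-.
  apply: eq_bigr => w2 _; rewrite inner_sum; apply: eq_bigr => w1 _; by rewrite innerZ.
have E2 : \sum_(w2 <- W2) \sum_(w1 <- W1) P2 w2 * P1 w1 * c = c.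
  under eq_bigr => w2 _ do rewrite -big_distrl -big_distrr /= P1sum mulr1.
  by rewrite -big_distrl /= P2sum mul1r.
have Heq : forall w2 w1, w2 \in W2 -> w1 \in W1 ->
    c - inner x (alpha *m wmx delta F (w2 ++ w1)) = 0.
  move=> v2 v1; apply: (@pos2 F Sigma W1 W2 P1 P2 (fun w2 w1 => c - inner x (alpha *m wmx delta F (w2 ++ w1))) P2pos P1pos).
    move=> w2 w1 i2 i1; rewrite subr_ge0; apply: Hle; apply/allpairsP; by exists (w2, w1).
  transitivity ((\sum_(w2 <- W2) \sum_(w1 <- W1) P2 w2 * P1 w1 * c) -
     \sum_(w2 <- W2) \sum_(w1 <- W1)
    P2 w2 * P1 w1 * inner x (alpha *m wmx delta F (w2 ++ w1))); last first.
    by rewrite E1 E2 subrr.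
  rewrite -sumrB; apply: eq_bigr => w2 _.
  rewrite -sumrB; apply: eq_bigr => w1 _; by rewrite mulrBr.
have HR1 : forall w, w \in W21 -> inner (charvec F R) (alpha *m wmx delta F w) = 1.
  move=> w Hw; rewrite inner_charvec_act -Hsum; apply: eq_bigr => i _.
  by rewrite !mxE inE (@W21_reach _ _ delta W1 W2 w i Hw) mul1r.
set y := x - c *: charvec F R.
have Hy : forall w, w \in W21 -> alpha *m wmx delta F w *m y^T = 0.
  move=> w Hw; apply/matrixP => i j; rewrite !ord1 [RHS]mxE -innerE innerC /y innerBZl.
  case/allpairsP: Hw => [[w2 w1] [/= i2 i1 ->]].
  rewrite HR1; last by apply/allpairsP; exists (w2, w1).
  by have := Heq _ _ i2 i1; move/eqP; rewrite subr_eq0 mulr1 => /eqP <-; rewrite subrr.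
have HyV : (y <= VS F R)%MS.
  rewrite /y -scaleNr; apply: addmx_sub Hx _; apply: scalemx_sub.
  exact: charvec_sub.
have Hyy := @orth F n Sigma delta alpha W21 (VS F R) 1 y^T Hcomp Hy y HyV.
have Hy0 : y = 0.
  have : inner y y = 0 by rewrite innerE Hyy mxE.
  rewrite /inner => H0; apply/rowP => i; rewrite [RHS]mxE.
  have Hp : forall i, true -> 0 <= y 0 i * y 0 i by move=> j _; rewrite -expr2 sqr_ge0.
  have : y 0 i * y 0 i = 0 by apply: (psumr_eq0P Hp H0).
  by move/eqP; rewrite mulf_eq0 orbb => /eqP.
apply/sub_rVP; exists c; apply/eqP; by rewrite -subr_eq0 -/y Hy0.
Qed.

Lemma inner_unit (F : realFieldType) n (u : 'rV[F]_n) r :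
  inner u (charvec F [set r]) = u 0 r.
Proof.
rewrite /inner (bigD1 r) //= big1 ?addr0; first by rewrite mxE inE eqxx mulr1.
by move=> k /negbTE Hk; rewrite mxE inE Hk mulr0.
Qed.

Lemma rowact_ge0 (F : realFieldType) n (Sigma : finType) (delta : 'I_n -> Sigma -> 'I_n)
   (alpha : 'rV[F]_n) w j :
  (forall i, 0 <= alpha 0 i) -> 0 <= (alpha *m wmx delta F w) 0 j.
Proof. by move=> Ha; rewrite rowact sumr_ge0 // => i _; rewrite mulr_ge0 ?ler0n. Qed.

Lemma alpha_pos (F : realFieldType) (n : nat) (Sigma : finType)
    (delta : 'I_n -> Sigma -> 'I_n) (W1 W2 : seq (seq Sigma))
    (P1 P2 : seq Sigma -> F) (alpha : 'rV[F]_n) :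
  pos_distr W1 P1 -> pos_distr W2 P2 ->
  (forall i, 0 <= alpha 0 i) ->
  alpha *m distr_mx delta W2 P2 *m distr_mx delta W1 P1 = alpha ->
  complete_for delta (concat_words W2 W1) (VS F (reach delta W1)) alpha ->
  forall r, r \in reach delta W1 -> 0 < alpha 0 r.
Proof.
move=> [P1pos P1sum] [P2pos P2sum] Ha Hstat Hcomp r Hr.
rewrite lt_def Ha andbT; apply/eqP => H0.
have E : \sum_(w2 <- W2) \sum_(w1 <- W1)
    P2 w2 * P1 w1 * (alpha *m wmx delta F (w2 ++ w1)) 0 r = 0.
  rewrite -[RHS]H0; have := congr1 (fun M : 'rV[F]_n => M 0 r) Hstat; rewrite decomp /= => <-.
  rewrite !summxE; apply: eq_bigr => w2 _; rewrite ?summxE; apply: eq_bigr => w1 _.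
  by rewrite !mxE.
have Z := @pos2 F Sigma W1 W2 P1 P2
   (fun w2 w1 => (alpha *m wmx delta F (w2 ++ w1)) 0 r) P2pos P1pos
   (fun w2 w1 _ _ => @rowact_ge0 F n Sigma delta alpha (w2 ++ w1) r Ha) E.
set A := (charvec F [set r])^T.
have HA : forall w, w \in concat_words W2 W1 -> alpha *m wmx delta F w *m A = 0.
  move=> w Hw; apply/matrixP => i j; rewrite !ord1 [RHS]mxE -innerE inner_unit.
  by case/allpairsP: Hw => [[w2 w1] [/= i2 i1 ->]]; apply: Z.
have Hsub : (charvec F [set r] <= VS F (reach delta W1))%MS.
  by apply: charvec_sub; rewrite sub1set.
have := @orth F n Sigma delta alpha _ _ 1 A Hcomp HA _ Hsub.
move/matrixP => /(_ 0 0); rewrite -innerE inner_unit !mxE inE eqxx => /eqP.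
by rewrite oner_eq0.
Qed.

Lemma memS (F : realFieldType) n (alpha : 'rV[F]_n) K :
  inner (charvec F K) alpha \in undup [seq inner alpha (charvec F K) | K : {set 'I_n}].
Proof. by rewrite mem_undup innerC; apply: map_f; rewrite mem_enum. Qed.

Lemma setact_nil n (Sigma : finType) (delta : 'I_n -> Sigma -> 'I_n) S :
  setact delta S [::] = S.
Proof. by rewrite /setact /act /=; apply: imset_id. Qed.

Lemma chain (F : realFieldType) n (Sigma : finType) (delta : 'I_n -> Sigma -> 'I_n)
   (W21 : seq (seq Sigma)) (R : {set 'I_n}) (alpha : 'rV[F]_n) :
  (forall x, (x <= VS F R)%MS -> ~~ (x <= charvec F R)%MS ->
     exists2 w, w \in W21 & inner x alpha < inner x (alpha *m wmx delta F w)) ->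
  (forall i, i \notin R -> alpha 0 i = 0) ->
  forall N K,
   (count (fun t => (inner (charvec F K) alpha <= t)%R)
      (undup [seq inner alpha (charvec F K) | K : {set 'I_n}]) <= N)%N ->
   0 < inner (charvec F K) alpha ->
   exists u, [/\ all (fun x => x \in W21) u, setact delta R (flatten u) \subset K &
     (size u < count (fun t => (inner (charvec F K) alpha <= t)%R)
      (undup [seq inner alpha (charvec F K) | K : {set 'I_n}]))%N].
Proof.
move=> H1 Hsupp N; set S := undup _.
have cpos : forall K, (0 < count (fun t => (inner (charvec F K) alpha <= t)%R) S)%N.
  by move=> K; rewrite -has_count; apply/hasP; exists (inner (charvec F K) alpha);
    rewrite ?memS ?lexx.
elim: N => [|N IH] K Hc Hpos.
  by have := cpos K; rewrite leqn0 in Hc; rewrite (eqP Hc).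
case: (boolP (R \subset K)) => HRK.
  by exists [::]; split => //; rewrite /= setact_nil.
set x := charvec F (K :&: R).
have HxV : (x <= VS F R)%MS by apply: charvec_sub; apply: subsetIr.
have [p Hp] : exists p, p \in K :&: R.
  apply/existsP; move: Hpos; apply: contraLR; rewrite negb_exists => /forallP Hn.
  rewrite -leNgt /inner le_eqVlt; apply/orP; left; apply/eqP.
  apply: big1 => i _; rewrite mxE; case Hi: (i \in K); last by rewrite mul0r.
  case HiR: (i \in R); last by rewrite Hsupp ?HiR // mulr0.
  by have := Hn i; rewrite inE Hi HiR.
have [r Hr HrK] : exists2 r, r \in R & r \notin K by apply/subsetPn.
have HxR : ~~ (x <= charvec F R)%MS.
  apply/negP => /sub_rVP [a Ha].
  have := congr1 (fun M : 'rV[F]_n => M 0 p) Ha; have := congr1 (fun M : 'rV[F]_n => M 0 r) Ha.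
  rewrite /x /= !mxE !inE (negbTE HrK) Hr; move: Hp; rewrite inE => /andP[-> ->].
  rewrite /= mulr1 => <- /eqP; by rewrite oner_eq0.
have [w Hw Hlt] := H1 x HxV HxR.
have Ex : inner x alpha = inner (charvec F K) alpha.
  apply: eq_bigr => i _; rewrite !mxE inE.
  case HiR: (i \in R); first by rewrite andbT.
  by rewrite Hsupp ?HiR // !mulr0.
set K' := [set i | act delta i w \in K :&: R].
have Ex2 : inner x (alpha *m wmx delta F w) = inner (charvec F K') alpha.
  exact: inner_charvec_act.
rewrite Ex Ex2 in Hlt.
have Hc' : (count (fun t => (inner (charvec F K') alpha <= t)%R) S <
            count (fun t => (inner (charvec F K) alpha <= t)%R) S)%N.
  apply: (@count_lt _ _ _ S (inner (charvec F K) alpha)).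
  - by move=> t Ht; apply: le_trans (ltW Hlt) Ht.
  - exact: memS.
  - exact: lexx.
  - by rewrite -ltNge.
have [u' [Hall Hsub Hsize]] := IH K' (leq_trans Hc' Hc) (lt_trans Hpos Hlt).
exists (rcons u' w); split.
- by rewrite all_rcons Hw Hall.
- rewrite -cats1 flatten_cat /= cats0 setact_cat.
  apply: subset_trans (imsetS _ Hsub) _.
  apply/subsetP => y /imsetP[q]; rewrite inE => Hq ->.
  by move: Hq; rewrite inE => /andP[].
- by rewrite size_rcons; apply: leq_trans Hc'.
Qed.

Lemma card_one (T : finType) (A : {set T}) r y :
  A \subset [set r] -> y \in A -> #|A| = 1%N.
Proof.
move=> H Hy; apply/eqP; rewrite eqn_leq; apply/andP; split.
  by rewrite -(cards1 r) subset_leq_card.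
by rewrite card_gt0; apply/set0Pn; exists y.
Qed.

Lemma flatten_size (Sigma : finType) (W21 : seq (seq Sigma)) D u :
  (forall w, w \in W21 -> (size w <= D)%N) -> all (fun x => x \in W21) u ->
  (size (flatten u) <= size u * D)%N.
Proof.
move=> HW; elim: u => //= w u IH /andP[Hw Hu].
by rewrite size_cat mulSn leq_add // ?HW // IH.
Qed.

Lemma inj_card n (Sigma : finType) (delta : 'I_n -> Sigma -> 'I_n) :
  (forall a, injective (fun q => delta q a)) -> forall w, #|setact delta setT w| = n.
Proof.
move=> Hinj w; rewrite /setact card_imset ?cardsT ?card_ord //.
elim: w => [|a w IH] p q //= H.
by apply: (Hinj a); apply: IH.
Qed.

Lemma charvec0 (F : realFieldType) n (alpha : 'rV[F]_n) :
  inner (charvec F set0) alpha = 0.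
Proof. by rewrite /inner big1 // => i _; rewrite mxE inE mul0r. Qed.

Theorem theorem1 (F : realFieldType) (n : nat) (Sigma : finType)
    (delta : 'I_n -> Sigma -> 'I_n)
    (d1 d2 : nat) (W1 W2 : seq (seq Sigma))
    (P1 P2 : seq Sigma -> F) (alpha : 'rV[F]_n) (w0 : seq Sigma) :
  (0 < n)%N -> (0 < #|Sigma|)%N ->
  (0 < d1)%N -> (0 < d2)%N ->
  uniq W1 -> uniq W2 -> W1 != [::] -> W2 != [::] ->
  (forall w, w \in W1 -> (size w <= d1)%N) ->
  (forall w, w \in W2 -> (size w <= d2)%N) ->
  pos_distr W1 P1 -> pos_distr W2 P2 ->
  let R := reach delta W1 in
  let W21 := concat_words W2 W1 in
  (forall i, 0 <= alpha 0 i) -> \sum_i alpha 0 i = 1 ->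
  (forall i, i \notin R -> alpha 0 i = 0) ->
  alpha *m distr_mx delta W2 P2 *m distr_mx delta W1 P1 = alpha ->
  complete_for delta W21 (VS F R) alpha ->
  setact delta [set: 'I_n] w0 = R ->
  (* (1) *)
  (forall x : 'rV[F]_n, (x <= VS F R)%MS -> ~~ (x <= charvec F R)%MS ->
     exists2 w, w \in W21 & inner x alpha < inner x (alpha *m wmx delta F w))
  (* (2) *)
  /\ (B_synchronizing delta R W21 /\
      forall k, B_rt_is delta R W21 k -> (k <= DS alpha - 1)%N)
  (* (3) *)
  /\ (synchronizing delta /\
      forall kA kB, rt_is delta kA -> B_rt_is delta R W21 kB ->
        (R != [set: 'I_n] ->
           (kA <= size w0 + kB * (d1 + d2))%N /\
           (size w0 + kB * (d1 + d2) <= size w0 + (DS alpha - 1) * (d1 + d2))%N) /\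
        (R = [set: 'I_n] -> (kA <= 1 + (DS alpha - 2) * (d1 + d2))%N)).
Proof.
move=> Hn HSig Hd1 Hd2 U1 U2 NE1 NE2 Hs1 Hs2 HP1 HP2 R W21 Ha Hsum Hsupp Hstat Hcomp Hw0.
have H1 := @part1 F n Sigma delta W1 W2 P1 P2 alpha HP1 HP2 Hsum Hstat Hcomp.
have Hpos := @alpha_pos F n Sigma delta W1 W2 P1 P2 alpha HP1 HP2 Ha Hstat Hcomp.
set S := undup [seq inner alpha (charvec F K) | K : {set 'I_n}].
have HDS : DS alpha = (size S - 1)%N by [].
have HB : forall K, 0 < inner (charvec F K) alpha ->
   exists u, [/\ all (fun x => x \in W21) u, setact delta R (flatten u) \subset K &
     (size u < count (fun t => (inner (charvec F K) alpha <= t)%R) S)%N].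
  by move=> K; apply: (@chain F n Sigma delta W21 R alpha H1 Hsupp _ K (leqnn _)).
have cntS : forall K, 0 < inner (charvec F K) alpha ->
    (count (fun t => (inner (charvec F K) alpha <= t)%R) S < size S)%N.
  move=> K HK; rewrite -(count_predT S).
  apply: (@count_lt _ _ _ S 0) => //.
    by have := @memS F n alpha set0; rewrite charvec0.
  by rewrite -ltNge.
have W21S : forall w, w \in W21 -> (size w <= d1 + d2)%N.
  by move=> w; apply: (@W21_size Sigma W1 W2 d1 d2 w Hs1 Hs2).
have [w1 i1] : exists w1, w1 \in W1.
  by case: W1 NE1 {Hs1 U1 HP1 Hpos Hcomp Hstat H1 R W21 Hsupp HB W21S Hw0} => // w ? _; exists w; rewrite inE eqxx.
set q0 := Ordinal Hn.
set r := act delta q0 w1.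
have HrR : r \in R by apply: (@reach_act n Sigma delta W1 q0 w1 i1).
have Hr0 : 0 < inner (charvec F [set r]) alpha by rewrite innerC inner_unit Hpos.
have [u0 [Hall0 Hsub0 Hsize0]] := HB _ Hr0.
have Hcnt0 := cntS _ Hr0.
have Hu0 : B_is_reset delta R W21 u0.
  split => //; apply: (@card_one _ _ r (act delta r (flatten u0)) Hsub0).
  by apply: imset_f.
have Hrt : forall k, B_rt_is delta R W21 k -> (k <= DS alpha - 1)%N.
  move=> k [_ Hmin]; have Hk := Hmin _ Hu0; rewrite HDS.
  have := leq_ltn_trans (leq_ltn_trans Hk Hsize0) Hcnt0; lia.
have HsyncA : forall u, B_is_reset delta R W21 u ->
    is_reset delta (w0 ++ flatten u).
  by move=> u [_ Hc]; rewrite /is_reset setact_cat Hw0.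
split => //; split; first by split => //; exists u0.
split; first by exists (w0 ++ flatten u0); apply: HsyncA.
move=> kA kB [_ HminA] HkB; split.
  move=> _; have [[uB [HuB HsB]] _] := HkB.
  have := HminA _ (HsyncA _ HuB); rewrite size_cat.
  have := @flatten_size Sigma W21 (d1 + d2) _ W21S (proj1 HuB); rewrite HsB => Hf Hk.
  have := Hrt _ HkB => HkD.
  split; first by apply: leq_trans Hk _; rewrite leq_add2l.
  by rewrite leq_add2l leq_mul2r HkD orbT.
move=> HR.
case: (ltnP 1 n) => Hn2; last first.
  have : is_reset delta [::] by rewrite /is_reset setact_nil cardsT card_ord; lia.
  by move/HminA => /=; rewrite leqn0 => /eqP ->.
have [a [p [p' [Hpp Hd]]]] : exists a p p', p != p' /\ delta p a = delta p' a.
  case: (boolP [exists a, exists p, exists p',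
                  (p != p') && (delta p a == delta p' a)]).
    move=> /existsP[a /existsP[p /existsP[p' /andP[H /eqP H']]]].
    by exists a, p, p'.
  move=> Hne; exfalso.
  have Hinj : forall a, injective (fun q => delta q a).
    move=> a q1 q2 /= Heq; case: (eqVneq q1 q2) => // Hne'; exfalso.
    move/negP: Hne; apply; apply/existsP; exists a; apply/existsP; exists q1.
    by apply/existsP; exists q2; rewrite Hne' Heq eqxx.
  have := Hu0 => -[_]; rewrite /is_reset.
  have := HsyncA _ Hu0; rewrite /is_reset inj_card //; lia.
set K0 := [set i | delta i a == delta p a].
have Hp : 0 < inner (charvec F [set p]) alpha by rewrite innerC inner_unit Hpos // -/R HR inE.
have Hp' : 0 < alpha 0 p' by rewrite Hpos // -/R HR inE.
have HK0 : inner (charvec F [set p]) alpha < inner (charvec F K0) alpha.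
  rewrite innerC inner_unit /inner (bigD1 p) //= (bigD1 p') /=; last by rewrite eq_sym.
  rewrite !mxE !inE eqxx Hd eqxx !mul1r.
  have : 0 <= \sum_(i | (i != p) && (i != p')) charvec F K0 0 i * alpha 0 i.
    by apply: sumr_ge0 => i _; rewrite mulr_ge0 // mxE ler0n.
  move: Hp'; move: (\sum_(i | _) _) => s; move: (alpha 0 p) (alpha 0 p') => x y. lra.
have HK0p : 0 < inner (charvec F K0) alpha by apply: lt_trans Hp HK0.
have [u [Hall Hsub Hsize]] := HB _ HK0p.
have Hc1 : (count (fun t => (inner (charvec F K0) alpha <= t)%R) S <
            count (fun t => (inner (charvec F [set p]) alpha <= t)%R) S)%N.
  apply: (@count_lt _ _ _ S (inner (charvec F [set p]) alpha)).
  - by move=> t Ht; apply: le_trans (ltW HK0) Ht.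
  - exact: memS.
  - exact: lexx.
  - by rewrite -ltNge.
have Hc2 := cntS _ Hp.
have Hres : is_reset delta (flatten u ++ [:: a]).
  rewrite /is_reset setact_cat -HR.
  apply: (@card_one _ _ (delta p a) (delta (act delta p (flatten u)) a)).
    apply/subsetP => y /imsetP[q Hq ->]; rewrite inE.
    by have := subsetP Hsub q Hq; rewrite inE.
  by apply: imset_f; apply: imset_f; rewrite HR inE.
have := HminA _ Hres; rewrite size_cat /= HDS.
have := @flatten_size Sigma W21 (d1 + d2) _ W21S Hall => Hf Hk.
apply: leq_trans Hk _; rewrite addn1 add1n ltnS.
apply: leq_trans Hf _; rewrite leq_mul2r; apply/orP; right.
have := leq_ltn_trans (leq_ltn_trans Hsize Hc1) Hc2.
move: (size u) (size S) => m1 m2; clear; lia.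
Qed.
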